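(* Let $k\ge 2$ and $m\ge 3$ be integers. Then $$\frac{(m-1)^k}{2}+\frac{m-1}{2}+1\;\le\; M_k(m)\;\le\;(m-1)^k+1.$$ More generally, for all positive integers $m_1,\ldots,m_k$, $$M(m_1,\ldots,m_k)\le \prod_{i=1}^{k}(m_i-1)+1.$$
   Context: All graphs are finite and simple. A path $v_1,v_2,\ldots,v_r$ in a graph $G$ is degree-monotone if $\deg_G(v_1)\le \deg_G(v_2)\le\cdots\le\deg_G(v_r)$, where $\deg_G$ denotes degree in $G$; its order is its number of vertices $r$. Let $mp(G)$ be the maximum order of a degree-monotone path in $G$. For a $k$-edge-coloring of $K_n$ with colors $1,\ldots,k$, let $G_j$ be the spanning subgraph of $K_n$ whose edges are those colored $j$ (degrees are taken in $G_j$). $M(m_1,\ldots,m_k)$ is the minimum integer $M$ such that for every $n\ge M$ and every $k$-edge-coloring of $K_n$ there is some $j\in\{1,\ldots,k\}$ with $mp(G_j)\ge m_j$. $M_k(m)$ denotes $M(m,m,\ldots,m)$ ($k$ entries). *)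

(* Defs.v *)
From mathcomp Require Import all_boot.
Set Implicit Arguments. Unset Strict Implicit. Unset Printing Implicit Defensive.

(* A k-edge-coloring of K_n on vertex set 'I_n is a function
   c : 'I_n -> 'I_n -> 'I_k that is symmetric on distinct pairs
   (the value c x x is irrelevant). *)

Definition is_coloring (n k : nat) (c : 'I_n -> 'I_n -> 'I_k) : Prop :=
  forall x y : 'I_n, x != y -> c x y = c y x.

Definition adjc (n k : nat) (c : 'I_n -> 'I_n -> 'I_k) (j : 'I_k) : rel 'I_n :=
  fun x y => (x != y) && (c x y == j).

Definition degc (n k : nat) (c : 'I_n -> 'I_n -> 'I_k) (j : 'I_k) (x : 'I_n) : nat :=
  #|[set y | adjc c j x y]|.

Definition dm_path (n k : nat) (c : 'I_n -> 'I_n -> 'I_k) (j : 'I_k) (p : seq 'I_n) : bool :=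
  [&& uniq p, sorted (adjc c j) p & sorted (fun x y => degc c j x <= degc c j y) p].

Definition mp_ge (n k : nat) (c : 'I_n -> 'I_n -> 'I_k) (j : 'I_k) (m : nat) : Prop :=
  exists p : seq 'I_n, dm_path c j p /\ m <= size p.

Definition goodM (k : nat) (ms : 'I_k -> nat) (M : nat) : Prop :=
  forall n : nat, M <= n ->
  forall c : 'I_n -> 'I_n -> 'I_k, is_coloring c -> exists j : 'I_k, mp_ge c j (ms j).

Definition isM (k : nat) (ms : 'I_k -> nat) (M : nat) : Prop :=
  goodM ms M /\ forall M' : nat, goodM ms M' -> M <= M'.

(* Main.v *)
Require Import Defs.
From mathcomp Require Import all_boot zify.
From Stdlib Require Import Classical.
Set Implicit Arguments. Unset Strict Implicit. Unset Printing Implicit Defensive.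

Definition cnt (S : seq (seq nat)) n (p : seq nat) := count (fun x => take n x == p) S.
Definition V2 (S : seq (seq nat)) := forall a b, a \in S -> b \in S -> forall t, t.+2 <= size a ->
  take t a = take t b -> nth 0 a t != nth 0 b t -> cnt S t.+1 (take t.+1 a) != cnt S t.+1 (take t.+1 b).

Fixpoint F (B q : nat) : nat := if q is q'.+1 then B + F B.-1 q' else 0.

Lemma cnt_cat S1 S2 n p : cnt (S1 ++ S2) n p = cnt S1 n p + cnt S2 n p.
Proof. by rewrite /cnt count_cat. Qed.

Lemma cnt_map q C n x p : cnt (map (cons q) C) n.+1 (x :: p) = (x == q) * cnt C n p.
Proof.
rewrite /cnt count_map; case: eqP => [->|ne] /=.
  by rewrite mul1n; apply: eq_count => c /=; rewrite eqseq_cons eqxx.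
rewrite mul0n; apply/eqP; rewrite -leqn0 leqNgt -has_count; apply/hasP => -[c _ /=].
by rewrite eqseq_cons => /andP[/eqP qx _]; apply: ne; rewrite qx.
Qed.

Lemma cnt_none S n x p : (forall a, a \in S -> head 0 a != x) -> cnt S n.+1 (x :: p) = 0.
Proof.
move=> H; apply/eqP; rewrite -leqn0 leqNgt -has_count; apply/hasP => -[c cS /=].
case: c cS => [|y c] cS //= ; rewrite eqseq_cons => /andP[/eqP yx _].
by move: (H _ cS); rewrite /= yx eqxx.
Qed.

Lemma cnt0 S : cnt S 0 [::] = size S.
Proof. by rewrite /cnt -(count_predT S); apply: eq_count => c; rewrite take0. Qed.

Lemma cnt_pos S n a : a \in S -> 0 < cnt S n (take n a).
Proof. by move=> aS; rewrite -has_count; apply/hasP; exists a. Qed.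

Lemma build m j Lj
  (IHj : forall r, r <= Lj -> exists C : seq (seq nat), [/\ uniq C, (forall a, a \in C -> size a = j),
      (forall a, a \in C -> all (fun e => e < m.-1) a), V2 C & size C = r]) :
  forall q B s, B <= Lj -> s <= F B q -> exists S : seq (seq nat),
   uniq S /\ (forall a, a \in S -> size a = j.+1) /\ (forall a, a \in S -> head 0 a < q) /\
    (forall a, a \in S -> all (fun e => e < m.-1) (behead a)) /\ V2 S /\
    (forall i, cnt S 1 [:: i] <= B) /\ size S = s.
Proof.
elim=> [|q IH] B s BL /=.
  rewrite leqn0 => /eqP ->; exists [::]; do 6 (split => //); by move=> i; rewrite /cnt.
move=> sF.
have r_le : minn s B <= Lj by rewrite (leq_trans (geq_minr _ _)).
have rest : s - minn s B <= F B.-1 q.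
  case: (leqP s B) => sB; first by rewrite subnn.
  by rewrite leq_subLR.
have [S' [uS' [sz' [hd' [bh' [V' [cn' szS']]]]]]] := IH B.-1 (s - minn s B) (leq_trans (leq_pred _) BL) rest.
have [C [uC szC alC VC szCr]] := IHj _ r_le.
exists (S' ++ map (cons q) C).
have cntS : forall n x p, cnt (S' ++ map (cons q) C) n.+1 (x :: p) =
   cnt S' n.+1 (x :: p) + (x == q) * cnt C n p by move=> *; rewrite cnt_cat cnt_map.
have S'q : forall n p, cnt S' n.+1 (q :: p) = 0.
  by move=> n p; apply: cnt_none => a aS; rewrite neq_ltn hd'.
have memS : forall a, a \in S' ++ map (cons q) C ->
   (a \in S') \/ exists2 a', a = q :: a' & a' \in C.
  by move=> a; rewrite mem_cat => /orP[->|/mapP[a' ? ->]]; [left|right; exists a'].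
split; [|split; [|split; [|split; [|split; [|split]]]]].
- rewrite cat_uniq uS' (map_inj_uniq (fun x y (h : q :: x = q :: y) => congr1 behead h)) uC /= andbT.
  apply/hasPn => a /mapP[a' _ ->]; apply/negP => /hd' /=; by rewrite ltnn.
- by move=> a /memS [/sz'|[a' -> /szC /= ->]].
- by move=> a /memS [/hd' /ltnW|[a' -> _]] /=; rewrite ?ltnS.
- by move=> a /memS [/bh'|[a' -> /alC]].
- move=> a b aS bS [|t] ta tab nab.
  + have [x [a' ea]] : exists x a', a = x :: a'.
      by case: a aS ta {tab nab} => [|x a'] //; exists x, a'.
    have [y [b' eb]] : exists y b', b = y :: b'.
      by case: b bS {tab nab} => [|y b'] //; [move=> /memS [/sz'|[? //]] | exists y, b'].
    subst a b; rewrite /= in nab *; rewrite !take0 !cntS.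
    case: (memS _ aS) => [aS'|[a'' [xq _] _]]; case: (memS _ bS) => [bS'|[b'' [yq _] _]];
      try subst x; try subst y.
    * have := hd' _ aS'; have := hd' _ bS'; rewrite /= => yq xq.
      rewrite (ltn_eqF xq) (ltn_eqF yq) /= !mul0n !addn0.
      have := (V' _ _ aS' bS' 0 ta erefl nab); by rewrite /= !take0.
    * have := hd' _ aS'; rewrite /= => xq; rewrite (ltn_eqF xq) S'q eqxx /= mul0n mul1n addn0 add0n.
      have := cn' x; have := cnt_pos 1 aS'; rewrite /= take0 => p1 c1.
      have sB : B < s.
        rewrite ltnNge; apply/negP => sB; move: szS'; rewrite (minn_idPl sB) subnn.
        by move/size0nil => E; rewrite E in aS'.
      rewrite cnt0 szCr (minn_idPr (ltnW sB)).
      rewrite neq_ltn; apply/orP; left; lia.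
    * have := hd' _ bS'; rewrite /= => yq; rewrite (ltn_eqF yq) S'q eqxx /= mul0n mul1n addn0 add0n.
      have := cn' y; have := cnt_pos 1 bS'; rewrite /= take0 => p1 c1.
      have sB : B < s.
        rewrite ltnNge; apply/negP => sB; move: szS'; rewrite (minn_idPl sB) subnn.
        by move/size0nil => E; rewrite E in bS'.
      rewrite cnt0 szCr (minn_idPr (ltnW sB)).
      rewrite neq_ltn; apply/orP; right; lia.
    * by rewrite eqxx in nab.
  + case: (memS _ aS) => [aS'|[a' ea aC]]; case: (memS _ bS) => [bS'|[b' eb bC]].
    * have [x [a' ea]] : exists x a', a = x :: a'.
        by case: a aS ta {tab nab aS'} => [|x a'] //; exists x, a'.
      have [y [b' eb]] : exists y b', b = y :: b'.
        by case: b bS bS' {tab nab} => [|y b'] //; [move=> _ /sz' | exists y, b'].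
      have := V' _ _ aS' bS' t.+1 ta tab nab.
      subst a b; move: (hd' _ aS') (hd' _ bS') => /= xq yq.
      by rewrite !cntS (ltn_eqF xq) (ltn_eqF yq) /= !mul0n !addn0.
    * have [x [a'' ea]] : exists x a', a = x :: a'.
        by case: a aS ta {tab nab aS'} => [|x a'] //; exists x, a'.
      subst a b; move: tab (hd' _ aS') => /= /eqP; rewrite eqseq_cons => /andP[/eqP -> _].
      by rewrite ltnn.
    * have [y [b'' eb]] : exists y b', b = y :: b'.
        by case: b bS bS' {tab nab} => [|y b'] //; [move=> _ /sz' | exists y, b'].
      subst a b; move: tab (hd' _ bS') => /= /eqP; rewrite eqseq_cons => /andP[/eqP <- _].
      by rewrite ltnn.
    * subst a b; rewrite /= in ta tab nab *; rewrite !cntS !S'q eqxx !mul1n !add0n.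
      case: tab => tab.
      by apply: VC => //; rewrite (szC _ aC) -ltnS -(szC _ aC).
- move=> i; rewrite /cnt count_cat; case: (eqVneq i q) => [->|iq].
  + rewrite -/(cnt _ _ _) -/(cnt _ _ _) S'q cnt_map eqxx mul1n cnt0 szCr.
    exact: geq_minr.
  + rewrite -/(cnt _ _ _) -/(cnt _ _ _) cnt_map (negbTE iq) mul0n addn0.
    by rewrite (leq_trans (cn' i)) // leq_pred.
- by rewrite size_cat size_map szS' szCr subnK // geq_minl.
Qed.
Definition Lv m j := iter j.-1 (fun L => F L m.-1) m.-1.

Lemma F_id q B : q <= B.+1 -> 2 * F B q + q * q.-1 = 2 * q * B.
Proof.
elim: q B => [|q IH] B //= h.
case: B h => [|B] h; first by case: q {IH} h.
have := IH B h; rewrite /=.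
case: q {IH h} => [|q] /=; nia.
Qed.

Lemma F_ge B q : 0 < q -> B <= F B q.
Proof. by case: q => //= q _; rewrite leq_addr. Qed.

Lemma Lv_ge m j : m.-1 <= Lv m j.
Proof.
rewrite /Lv; case: j => [|j] //=; elim: j => [|j IH] //=.
rewrite (leq_trans IH) //; apply: F_ge. 
Abort.

Lemma Lv_ge m j : 0 < m.-1 -> m.-1 <= Lv m j.
Proof.
move=> m1; rewrite /Lv; case: j => [|j] //=; elim: j => [|j IH] //=.
by rewrite (leq_trans IH) //; apply: F_ge.
Qed.

Lemma Lv_S m j : Lv m j.+2 = F (Lv m j.+1) m.-1.
Proof. by []. Qed.

Lemma Lv_val m j : 0 < m.-1 -> 2 * Lv m j.+1 = m.-1 ^ j.+1 + m.-1.
Proof.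
move=> m1; elim: j => [|j IH]; first by rewrite /Lv /= expn1; lia.
rewrite Lv_S.
have h := Lv_ge j.+1 m1.
have := F_id (q := m.-1) (B := Lv m j.+1) (leq_trans h (leqnSn _)).
rewrite expnS.
move: IH; set L := Lv m j.+1; set P := m.-1 ^ j.+1; set n := m.-1; move=> IH E.
have : 2 * F L n * 1 = n * P + n by nia.
lia.
Qed.

Lemma exists_level m j : 0 < j -> forall s, s <= Lv m j -> exists C : seq (seq nat),
  [/\ uniq C, (forall a, a \in C -> size a = j),
      (forall a, a \in C -> all (fun e => e < m.-1) a), V2 C & size C = s].
Proof.
case: j => [|j] // _; elim: j => [|j IH] s.
  rewrite /Lv /= => sm.
  exists [seq [:: i] | i <- iota 0 s]; split.
  - by rewrite (map_inj_uniq (fun x y (h : [:: x] = [:: y]) => congr1 (head 0) h)) iota_uniq.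
  - by move=> a /mapP[i _ ->].
  - move=> a /mapP[i]; rewrite mem_iota add0n => /andP[_ iS] -> /=.
    by rewrite (leq_trans iS sm).
  - by move=> a b /mapP[i _ ->] _ t.
  - by rewrite size_map size_iota.
rewrite Lv_S => sL.
have [S [uS [sz [hd [bh [VS [_ szS]]]]]]] := build IH (leqnn _) sL.
exists S; split => //.
move=> a aS; have := sz _ aS; have := hd _ aS; have := bh _ aS.
by case: a {aS} => [|x a] //= -> ->.
Qed.

Lemma card_count (T : Type) (x0 : T) (S : seq T) (q : pred T) :
  #|[set y : 'I_(size S) | q (nth x0 S y)]| = count q S.
Proof.
rewrite cardsE cardE /enum_mem size_filter.
have -> : count q S = count q (mkseq (nth x0 S) (size S)) by rewrite mkseq_nth.
rewrite /mkseq -val_enum_ord -map_comp count_map.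
by rewrite enumT; apply: eq_count => y /=.
Qed.

Fixpoint lcp (a b : seq nat) : nat :=
  match a, b with x :: a', y :: b' => if x == y then (lcp a' b').+1 else 0 | _, _ => 0 end.

Lemma lcp_sym a b : lcp a b = lcp b a.
Proof. by elim: a b => [|x a IH] [|y b] //=; rewrite eq_sym IH. Qed.

Lemma lcpE a b t : size a = size b -> t < size a ->
  (lcp a b == t) = (take t a == take t b) && (take t.+1 a != take t.+1 b).
Proof.
elim: a b t => [|x a IH] [|y b] t //= [sab].
case: t => [|t] /=.
  by move=> _; rewrite !take0 eqseq_cons eqxx andbT; case: (x == y).
rewrite ltnS => ta; rewrite !eqseq_cons; case: (x == y) => //=.
by rewrite eqSS IH.
Qed.

Lemma lcp_lt a b : size a = size b -> a != b -> lcp a b < size a.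
Proof.
elim: a b => [|x a IH] [|y b] //= [sab]; rewrite eqseq_cons.
by case: (x == y) => //= /(IH _ sab).
Qed.

Lemma path_const (T : Type) (e : rel T) (f : T -> seq nat) y0 p :
  (forall x y, e x y -> f x = f y) -> path e y0 p -> forall y, y \in map f (y0 :: p) -> y = f y0.
Proof.
move=> H; elim: p y0 => [|z p IH] y0 /=.
  by move=> _ y; rewrite inE => /eqP.
move=> /andP[ez pz] y; rewrite inE => /orP[/eqP //|yin].
by rewrite (IH z pz y yin) (H _ _ ez).
Qed.

Lemma bad_coloring k m (S : seq (seq nat)) : 0 < m -> uniq S ->
  (forall a, a \in S -> size a = k.+1) -> (forall a, a \in S -> all (fun e => e < m.-1) a) -> V2 S ->
  exists c : 'I_(size S) -> 'I_(size S) -> 'I_k.+1, is_coloring c /\ forall j, ~ mp_ge c j m.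
Proof.
move=> m0 uS szS alS VS.
pose A (x : 'I_(size S)) := nth [::] S x.
have AS x : A x \in S by apply: mem_nth.
have Ainj x y : (A x == A y) = (x == y) by rewrite /A nth_uniq.
pose c x y : 'I_k.+1 := inord (k - lcp (A x) (A y)).
exists c; split.
  by move=> x y _; rewrite /c lcp_sym.
move=> j [p [/and3P[up adjp degp] msz]].
pose t := k - j.
have jk : j <= k by rewrite -ltnS.
have tk : t < k.+1 by rewrite /t ltnS leq_subr.
have adjE x y : adjc c j x y = (take t (A x) == take t (A y)) && (take t.+1 (A x) != take t.+1 (A y)).
  rewrite /adjc; case: (eqVneq x y) => [->|xy] /=; first by rewrite !eqxx.
  have Axy : A x != A y by rewrite Ainj.
  have lt := lcp_lt (etrans (szS _ (AS x)) (esym (szS _ (AS y)))) Axy.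
  rewrite szS ?AS // ltnS in lt.
  rewrite -lcpE ?szS ?AS //.
  apply/eqP/eqP => [/(congr1 val)|E].
    rewrite /= /c inordK ?ltnS ?leq_subr // /t; lia.
  apply: val_inj; rewrite /= /c inordK ?ltnS ?leq_subr //; rewrite /t in E; lia.
have Hp : 0 < size p by lia.
case: p up adjp degp msz Hp => [|y0 p'] // up adjp degp msz _.
pose P := take t (A y0).
have tP : forall y, y \in y0 :: p' -> take t (A y) = P.
  move=> y yin; apply: (path_const (f := fun x => take t (A x)) _ adjp (map_f _ yin)).
  by move=> x z; rewrite adjE => /andP[/eqP].
pose g y := nth 0 (A y) t.
have gm y : g y < m.-1.
  by have /allP := alS _ (AS y); apply; apply: mem_nth; rewrite szS ?AS.
have tg y : take t.+1 (A y) = rcons (take t (A y)) (g y) by rewrite (take_nth 0) // szS ?AS.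
suff ug : uniq (map g (y0 :: p')).
  have H := uniq_leq_size ug (s2 := iota 0 m.-1).
  have : size (map g (y0 :: p')) <= m.-1.
    by rewrite -(size_iota 0 m.-1); apply: H => i /mapP[y _ ->]; rewrite mem_iota add0n gm.
  rewrite size_map; lia.
case: (eqVneq j ord0) => [j0|j0].
  rewrite map_inj_in_uniq // => y z yin zin gyz.
  apply/eqP; rewrite -Ainj.
  have : take t.+1 (A y) = take t.+1 (A z) by rewrite !tg (tP _ yin) (tP _ zin) gyz.
  by rewrite /t j0 subn0 !take_oversize ?szS ?AS // => ->.
have jp : 0 < j by case: j j0 {jk tk adjE tP gm tg adjp degp t P g} => [[|jj] Hj].
have tlt : t < k by rewrite /t; lia.
pose h y := #|[set w | take t.+1 (A y) == take t.+1 (A w)]|.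
pose H i := #|[set w | rcons P i == take t.+1 (A w)]|.
have hH : map h (y0::p') = map H (map g (y0::p')).
  by rewrite -map_comp; apply/eq_in_map => y yin /=; rewrite /h /H tg (tP _ yin).
apply: (@map_uniq _ _ H); rewrite -hH.
pose Ay y := [set w | take t (A y) == take t (A w)].
have hA y : h y <= #|Ay y|.
  apply: subset_leq_card; apply/subsetP => w; rewrite !inE => /eqP E.
  by rewrite -(take_takel (A y) (leqnSn t)) E take_takel.
have degE y : degc c j y = #|Ay y| - h y.
  have sub : [set w | take t.+1 (A y) == take t.+1 (A w)] \subset Ay y.
    apply/subsetP => w; rewrite !inE => /eqP E.
    by rewrite -(take_takel (A y) (leqnSn t)) E take_takel.
  rewrite /degc (_ : [set w | adjc c j y w] = Ay y :\: [set w | take t.+1 (A y) == take t.+1 (A w)]).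
    by rewrite cardsD (setIidPr sub).
  by apply/setP => w; rewrite !inE adjE andbC.
have hc y : h y = cnt S t.+1 (take t.+1 (A y)).
  by rewrite /h /cnt -(card_count [::]); apply: eq_card => w; rewrite !inE eq_sym.
have sh : sorted (fun a b => b < a) (map h (y0 :: p')).
  rewrite sorted_map.
  have := introT andP (conj adjp degp); rewrite -sorted_relI.
  apply: sub_sorted => y z /andP[ayz dyz] /=.
  move: ayz; rewrite adjE => /andP[/eqP tyz nyz].
  have Ayz : Ay y = Ay z by apply/setP => w; rewrite !inE tyz.
  have ne : h z != h y.
    rewrite !hc eq_sym; apply: VS; rewrite ?AS ?szS ?AS //.
    apply: contra nyz => /eqP gyz; by rewrite !tg tyz /g gyz.
  move: dyz; rewrite !degE Ayz => dyz.
  have := hA y; have := hA z; rewrite Ayz; move: ne; lia.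
apply: (sorted_uniq _ _ sh).
- by move=> a b d ab bd; apply: ltn_trans ab.
- by move=> a; rewrite ltnn.
Qed.

Lemma card_dffun_prod k (ms : 'I_k -> nat) : #|{dffun forall j : 'I_k, 'I_(ms j).-1}| = \prod_(j < k) (ms j - 1).
Proof.
rewrite card_dep_ffun foldrE big_map big_enum /=.
apply: eq_bigr => j _; by rewrite card_ord subn1.
Qed.

Lemma sorted_rcons2 (T : Type) (e : rel T) s u v : sorted e (rcons s u) -> e u v -> sorted e (rcons (rcons s u) v).
Proof.
case: s => [|x s] /=; first by move=> _ ->.
by rewrite !rcons_path last_rcons => -> ->.
Qed.

Lemma upper k (ms : 'I_k -> nat) : goodM ms (\prod_(j < k) (ms j - 1) + 1).
Proof.
move=> n nge c cc.
case: (classic (exists j, mp_ge c j (ms j))) => // Hn; exfalso.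
have noP j p : dm_path c j p -> size p < ms j.
  move=> dp; rewrite ltnNge; apply/negP => le; apply: Hn; exists j, p; split => //.
pose ltk j (x y : 'I_n) := (degc c j x < degc c j y) || ((degc c j x == degc c j y) && (x < y)).
have ltk_trans j : transitive (ltk j).
  move=> y x z; rewrite /ltk => /orP[h1|/andP[/eqP h1 h2]] /orP[h3|/andP[/eqP h3 h4]].
  - by rewrite (ltn_trans h1 h3).
  - by rewrite -h3 h1.
  - by rewrite h1 h3.
  - by rewrite h1 h3 eqxx (ltn_trans h2 h4) orbT.
have ltk_irr j : irreflexive (ltk j).
  by move=> x; rewrite /ltk !ltnn andbF.
have ltk_tot j x y : x != y -> ltk j x y || ltk j y x.
  rewrite /ltk => xy; case: (ltngtP (degc c j x) (degc c j y)) => //= _.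
  by case: (ltngtP x y) => // /val_inj E; rewrite E eqxx in xy.
pose spath j (s : seq 'I_n) := sorted (adjc c j) s && sorted (ltk j) s.
have sp_dm j s : spath j s -> dm_path c j s.
  move=> /andP[a l]; rewrite /dm_path a (sorted_uniq (ltk_trans j) (ltk_irr j) l) /=.
  by apply: sub_sorted l => x y /orP[/ltnW|/andP[/eqP -> _]].
pose Pd j v l := [exists t : l.-tuple 'I_n, spath j (rcons t v)].
have Pd_ms j v l : Pd j v l -> l.+1 < ms j.
  by move=> /existsP[t /sp_dm /noP]; rewrite size_rcons size_tuple.
have Pd_n j v l : Pd j v l -> l < n.
  move=> /existsP[t /sp_dm /and3P[u _ _]].
  have := uniq_leq_size u (s2 := enum 'I_n) (fun x _ => mem_enum _ x).
  by rewrite size_rcons size_tuple size_enum_ord.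
have Pd0 j v : Pd j v 0.
  by apply/existsP; exists [tuple]; rewrite /spath /=.
pose PdS j v := [pred l : 'I_n | Pd j v l].
pose f j v := \max_(l in PdS j v) (l : nat).
have n0 : 0 < n by lia.
have fatt j v : Pd j v (f j v).
  rewrite /f; have [|l Pl ->] := eq_bigmax_cond (fun l : 'I_n => (l : nat)) (A := PdS j v).
    by apply/card_gt0P; exists (Ordinal n0); rewrite inE /= Pd0.
  exact: Pl.
have ext j u v : adjc c j u v -> ltk j u v -> f j u < f j v.
  move=> a l; have := fatt j u; move=> /existsP[t st].
  have Pv : Pd j v (f j u).+1.
    have sz : size (rcons t u) == (f j u).+1 by rewrite size_rcons size_tuple.
    apply/existsP; exists (Tuple sz) => /=.
    by case/andP: st => s1 s2; rewrite /spath !sorted_rcons2.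
  have := Pd_n _ _ _ Pv => lt.
  have := @leq_bigmax_cond _ (fun l : 'I_n => l \in PdS j v) (fun l : 'I_n => (l : nat)) (Ordinal lt); apply; by rewrite inE.
have flt j v : f j v < (ms j).-1.
  by have := Pd_ms _ _ _ (fatt j v); lia.
pose Fv v : {dffun forall j : 'I_k, 'I_(ms j).-1} := [ffun j => Ordinal (flt j v)].
have Finj : injective Fv.
  move=> u v E; apply/eqP; apply/negP => /negP uv.
  pose j := c u v.
  have fe : f j u = f j v by have := congr1 (fun G : {dffun forall j : 'I_k, 'I_(ms j).-1} => val (G j)) E; rewrite /= !ffunE.
  have auv : adjc c j u v by rewrite /adjc uv eqxx.
  have avu : adjc c j v u by rewrite /adjc eq_sym uv /= (cc v u) ?eqxx // eq_sym.
  case/orP: (ltk_tot j _ _ uv) => h.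
    by have := ext _ _ _ auv h; rewrite fe ltnn.
  by have := ext _ _ _ avu h; rewrite fe ltnn.
have := @leq_card _ _ Fv Finj; rewrite card_ord card_dffun_prod; lia.
Qed.

Lemma exists_min k (ms : 'I_k -> nat) N : goodM ms N -> exists M, isM ms M /\ M <= N.
Proof.
elim: N => [|N IH] g.
  by exists 0; split => //; split => // M' _.
case: (classic (goodM ms N)) => [gN|ngN].
  by have [M [iM le]] := IH gN; exists M; split => //; rewrite (leq_trans le).
exists N.+1; split => //; split => // M' gM'.
rewrite ltnNge; apply/negP => le; apply: ngN => n Nn; apply: gM'; exact: leq_trans le Nn.
Qed.

Theorem theorem1p2 :
  (forall k m : nat, 2 <= k -> 3 <= m ->
     exists M : nat, isM (fun _ : 'I_k => m) M /\
       (m - 1) ^ k + (m - 1) + 2 <= 2 * M /\ M <= (m - 1) ^ k + 1) /\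
  (forall (k : nat) (ms : 'I_k -> nat), (forall j, 0 < ms j) ->
     exists M : nat, isM ms M /\ M <= \prod_(j < k) (ms j - 1) + 1).
Proof.
split; last first.
  by move=> k ms _; apply: exists_min; apply: upper.
move=> k m k2 m3.
have [M [iM le]] := exists_min (upper (ms := fun _ : 'I_k => m)).
exists M; split => //.
have E : \prod_(j < k) (m - 1) = (m - 1) ^ k by rewrite prod_nat_const card_ord.
rewrite E in le; clear E.
split => //.
case: k k2 iM le => [|k] // k2 iM le.
have m1 : 0 < m.-1 by lia.
have [S [uS szS alS VS szL]] := exists_level (m := m) (j := k.+1) (erefl _) (leqnn _).
have [c [cc nop]] := bad_coloring (m := m) (ltnW (ltnW m3)) uS szS alS VS.
have lt : size S < M.
  rewrite ltnNge; apply/negP => MS.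
  have [j hj] := iM.1 _ MS c cc.
  exact: nop j hj.
have := Lv_val k m1; rewrite -szL subn1; lia.
Qed.
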